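(* Let $p\in\mathsf{Prop}$ and $\alpha\in\mathsf{AtProg}$. (1) The sequent $p,[\alpha][\alpha^*]p\Rightarrow[\alpha^*]p$ is not cut-free provable in $\mathtt{GTPDL}$; moreover, it is not Fischer–Ladner-cut provable in $\mathtt{GTPDL}$. (2) $p,[\alpha][\alpha^*]p\Rightarrow[\alpha^*]p$ is cut-free provable in $\mathtt{CGTPDL}$. (3) $p\Rightarrow[\alpha]\langle\alpha\rangle^{\leftarrow}p$ is provable in $\mathtt{GTPDL}$ and in $\mathtt{CGTPDL}$. (4) $p\Rightarrow[\alpha]\langle\alpha\rangle^{\leftarrow}p$ is cut-free provable neither in $\mathtt{GTPDL}$ nor in $\mathtt{CGTPDL}$.
   Context: $\mathtt{TPDL}$ formulas/programs over sets $\mathsf{Prop}$, $\mathsf{AtProg}$: $\varphi ::= \bot \mid p \mid (\varphi\to\varphi) \mid [\pi]\varphi \mid [\pi]^{\leftarrow}\varphi$, $\pi ::= \alpha \mid \pi;\pi \mid \pi\cup\pi \mid \pi^{*} \mid \varphi?$. Abbreviations: $\neg\varphi:=\varphi\to\bot$, $\langle\pi\rangle^{\leftarrow}\varphi:=\neg[\pi]^{\leftarrow}\neg\varphi$. $[\pi]\Gamma=\{[\pi]\varphi:\varphi\in\Gamma\}$, similarly $[\pi]^{\leftarrow}\Gamma$. A sequent is a pair $\Gamma\Rightarrow\Delta$ of finite sets of formulas (commas denote union). Common rules (premises / conclusion): (Ax) / $\Gamma\Rightarrow\Delta$, $\Gamma\cap\Delta\neq\emptyset$; ($\bot$) / $\Gamma,\bot\Rightarrow\Delta$;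 ($\to$L) $\Gamma\Rightarrow\varphi,\Delta$ and $\Gamma,\psi\Rightarrow\Delta$ / $\Gamma,\varphi\to\psi\Rightarrow\Delta$; ($\to$R) $\Gamma,\varphi\Rightarrow\psi,\Delta$ / $\Gamma\Rightarrow\varphi\to\psi,\Delta$; (Wk) $\Gamma\Rightarrow\Delta$ / $\Gamma'\Rightarrow\Delta'$, $\Gamma\subseteq\Gamma'$, $\Delta\subseteq\Delta'$; (Cut) $\Gamma\Rightarrow\varphi,\Delta$ and $\Gamma,\varphi\Rightarrow\Delta$ / $\Gamma\Rightarrow\Delta$ ($\varphi$ the cut formula); ($[\,]$) $\Gamma\Rightarrow\varphi,[\pi]^{\leftarrow}\Delta$ / $[\pi]\Gamma\Rightarrow[\pi]\varphi,\Delta$; ($[\,]^{\leftarrow}$) $\Gamma\Rightarrow\varphi,[\pi]\Delta$ / $[\pi]^{\leftarrow}\Gamma\Rightarrow[\pi]^{\leftarrow}\varphi,\Delta$; ($[;]$L) $\Gamma,[\pi_0][\pi_1]\varphi\Rightarrow\Delta$ / $\Gamma,[\pi_0;\pi_1]\varphi\Rightarrow\Delta$; ($[;]$R) $\Gamma\Rightarrow[\pi_0][\pi_1]\varphi,\Delta$ / $\Gamma\Rightarrow[\pi_0;\pi_1]\varphi,\Delta$; ($[\cup]$L) $\Gamma,[\pi_0]\varphi,[\pi_1]\varphi\Rightarrow\Delta$ / $\Gamma,[\pi_0\cup\pi_1]\varphi\Rightarrow\Delta$; ($[\cup]$R) $\Gamma\Rightarrow\Delta,[\pi_0]\varphi$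 and $\Gamma\Rightarrow\Delta,[\pi_1]\varphi$ / $\Gamma\Rightarrow[\pi_0\cup\pi_1]\varphi,\Delta$; ($[*]$L) $\Gamma,\varphi,[\pi][\pi^*]\varphi\Rightarrow\Delta$ / $\Gamma,[\pi^*]\varphi\Rightarrow\Delta$; ($[?]$L) $\Gamma\Rightarrow\varphi,\Delta$ and $\Gamma,\psi\Rightarrow\Delta$ / $\Gamma,[\varphi?]\psi\Rightarrow\Delta$; ($[?]$R) $\Gamma,\varphi\Rightarrow\psi,\Delta$ / $\Gamma\Rightarrow[\varphi?]\psi,\Delta$. $\mathtt{GTPDL}$ adds ($[*]$R) $\Gamma,\varphi\Rightarrow[\pi]\varphi$ / $[\pi^*]\Gamma,\varphi\Rightarrow[\pi^*]\varphi$; its proofs are finite trees of rule instances with all leaves Ax/$\bot$. $\mathtt{CGTPDL}$ instead adds (C-s) $\Gamma\Rightarrow\varphi,\Delta$ and $\Gamma\Rightarrow[\pi][\pi^*]\varphi,\Delta$ / $\Gamma\Rightarrow[\pi^*]\varphi,\Delta$; its proofs are finite trees of rule instances whose leaves are Ax/$\bot$ instances or buds, each bud assigned a companion (an inner node with the same sequent), such that in the graph identifying buds with companions every infinite path has a tail followed by a trace with infinitely many progress points; a trace along a path $(\Gamma_i\Rightarrow\Delta_i)$ is a sequence $\tau_i\in\Delta_i$ which at ($\to$R), ($[;]$R), ($[\cup]$R), ($[?]$R), (C-s) either stays the same or passes from the principal formula to its component in the chosen premise ($\psi$ for $\varphi\to\psi$; $[\pi_0][\pi_1]\varphi$; $[\pi_j]\varphi$;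 $\psi$ for $[\varphi?]\psi$; $\varphi$ or $[\pi][\pi^*]\varphi$ for $[\pi^*]\varphi$, the latter a progress point), at ($[\,]$)/($[\,]^{\leftarrow}$) passes from the principal $[\pi]\varphi$/$[\pi]^{\leftarrow}\varphi$ to $\varphi$, and otherwise stays the same. A proof is cut-free if no Cut instance occurs. The Fischer–Ladner closure: $\mathrm{FL}(\bot)=\{\bot\}$, $\mathrm{FL}(p)=\{p\}$, $\mathrm{FL}(\psi_0\to\psi_1)=\{\psi_0\to\psi_1\}\cup\mathrm{FL}(\psi_0)\cup\mathrm{FL}(\psi_1)$, $\mathrm{FL}([\pi]\psi)=\mathrm{FL}_\Box([\pi]\psi)\cup\mathrm{FL}(\psi)$, $\mathrm{FL}([\pi]^{\leftarrow}\psi)=\mathrm{FL}_\Box([\pi]^{\leftarrow}\psi)\cup\mathrm{FL}(\psi)$; $\mathrm{FL}_\Box([\alpha]\psi)=\{[\alpha]\psi\}$, $\mathrm{FL}_\Box([\pi_0;\pi_1]\psi)=\{[\pi_0;\pi_1]\psi\}\cup\mathrm{FL}_\Box([\pi_0][\pi_1]\psi)\cup\mathrm{FL}_\Box([\pi_1]\psi)$, $\mathrm{FL}_\Box([\pi_0\cup\pi_1]\psi)=\{[\pi_0\cup\pi_1]\psi\}\cup\mathrm{FL}_\Box([\pi_0]\psi)\cup\mathrm{FL}_\Box([\pi_1]\psi)$, $\mathrm{FL}_\Box([\pi^*]\psi)=\{[\pi^*]\psi\}\cup\mathrm{FL}_\Box([\pi][\pi^*]\psi)$, $\mathrm{FL}_\Box([\psi_0?]\psi_1)=\{[\psi_0?]\psi_1\}\cup\mathrm{FL}(\psi_0)$,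 backwards versions analogous except $\mathrm{FL}_\Box([\pi_0;\pi_1]^{\leftarrow}\psi)=\{[\pi_0;\pi_1]^{\leftarrow}\psi\}\cup\mathrm{FL}_\Box([\pi_1]^{\leftarrow}[\pi_0]^{\leftarrow}\psi)\cup\mathrm{FL}_\Box([\pi_0]^{\leftarrow}\psi)$; $\mathrm{FL}(\Lambda)=\bigcup_{\varphi\in\Lambda}\mathrm{FL}(\varphi)$. A Cut instance with conclusion $\Gamma\Rightarrow\Delta$ is a Fischer–Ladner-cut if its cut formula lies in $\mathrm{FL}(\Gamma\cup\Delta)$; a sequent is Fischer–Ladner-cut provable if it has a proof in which every Cut instance is a Fischer–Ladner-cut. *)

(* Defs.v *)
From Stdlib Require Import List.
Import ListNotations.
Set Implicit Arguments.

Section Syntax.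
Variables (P A : Type).

Inductive form : Type :=
| Bot : form
| Var : P -> form
| Imp : form -> form -> form
| Box : prog -> form -> form
| BoxB : prog -> form -> form
with prog : Type :=
| Atom : A -> prog
| Seq : prog -> prog -> prog
| Cho : prog -> prog -> prog
| Star : prog -> prog
| Test : form -> prog.

Definition Neg (f : form) : form := Imp f Bot.
Definition DiaB (pi : prog) (f : form) : form := Neg (BoxB pi (Neg f)).

(* Fischer--Ladner closure: inFL chi phi  <->  chi \in FL(phi);
   inFLb chi phi <-> chi \in FL_Box(phi)  (phi a boxed formula). *)
Inductive inFL : form -> form -> Prop :=
| fl_bot : inFL Bot Bot
| fl_var : forall q, inFL (Var q) (Var q)
| fl_imp : forall f g, inFL (Imp f g) (Imp f g)
| fl_imp_l : forall c f g, inFL c f -> inFL c (Imp f g)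
| fl_imp_r : forall c f g, inFL c g -> inFL c (Imp f g)
| fl_box_b : forall c pi f, inFLb c (Box pi f) -> inFL c (Box pi f)
| fl_box_s : forall c pi f, inFL c f -> inFL c (Box pi f)
| fl_boxB_b : forall c pi f, inFLb c (BoxB pi f) -> inFL c (BoxB pi f)
| fl_boxB_s : forall c pi f, inFL c f -> inFL c (BoxB pi f)
with inFLb : form -> form -> Prop :=
| flb_self : forall pi f, inFLb (Box pi f) (Box pi f)
| flb_seq1 : forall c p0 p1 f, inFLb c (Box p0 (Box p1 f)) -> inFLb c (Box (Seq p0 p1) f)
| flb_seq2 : forall c p0 p1 f, inFLb c (Box p1 f) -> inFLb c (Box (Seq p0 p1) f)
| flb_cho1 : forall c p0 p1 f, inFLb c (Box p0 f) -> inFLb c (Box (Cho p0 p1) f)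
| flb_cho2 : forall c p0 p1 f, inFLb c (Box p1 f) -> inFLb c (Box (Cho p0 p1) f)
| flb_star : forall c p f, inFLb c (Box p (Box (Star p) f)) -> inFLb c (Box (Star p) f)
| flb_test : forall c g f, inFL c g -> inFLb c (Box (Test g) f)
| flbB_self : forall pi f, inFLb (BoxB pi f) (BoxB pi f)
| flbB_seq1 : forall c p0 p1 f, inFLb c (BoxB p1 (BoxB p0 f)) -> inFLb c (BoxB (Seq p0 p1) f)
| flbB_seq2 : forall c p0 p1 f, inFLb c (BoxB p0 f) -> inFLb c (BoxB (Seq p0 p1) f)
| flbB_cho1 : forall c p0 p1 f, inFLb c (BoxB p0 f) -> inFLb c (BoxB (Cho p0 p1) f)
| flbB_cho2 : forall c p0 p1 f, inFLb c (BoxB p1 f) -> inFLb c (BoxB (Cho p0 p1) f)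
| flbB_star : forall c p f, inFLb c (BoxB p (BoxB (Star p) f)) -> inFLb c (BoxB (Star p) f)
| flbB_test : forall c g f, inFL c g -> inFLb c (BoxB (Test g) f).

(* Sequents: pairs of finite sets, represented by lists read as sets. *)
Definition sequent : Type := (list form * list form)%type.
Definition seteq (l l' : list form) : Prop := forall x, In x l <-> In x l'.
Definition sqeq (s s' : sequent) : Prop := seteq (fst s) (fst s') /\ seteq (snd s) (snd s').

Inductive rlab : Type :=
| RAx | RBot
| RImpL : form -> form -> rlab
| RImpR : form -> form -> rlab
| RWk
| RCut : form -> rlab
| RBox : prog -> form -> rlab
| RBoxB : prog -> form -> rlab
| RSeqL : prog -> prog -> form -> rlab
| RSeqR : prog -> prog -> form -> rlab
| RChoL : prog -> prog -> form -> rlab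
| RChoR : prog -> prog -> form -> rlab
| RStarL : prog -> form -> rlab
| RTestL : form -> form -> rlab
| RTestR : form -> form -> rlab
| RStarR : prog -> form -> rlab     (* GTPDL only: ([*]R) *)
| RCs : prog -> form -> rlab        (* CGTPDL only: (C-s) *)
| RBud : list nat -> rlab.          (* CGTPDL bud, with address of its companion *)

Inductive inst : rlab -> sequent -> list sequent -> Prop :=
| i_ax : forall G D f, In f G -> In f D -> inst RAx (G, D) []
| i_bot : forall G D, In Bot G -> inst RBot (G, D) []
| i_impL : forall G D f g,
    inst (RImpL f g) (Imp f g :: G, D) [(G, f :: D); (g :: G, D)]
| i_impR : forall G D f g, inst (RImpR f g) (G, Imp f g :: D) [(f :: G, g :: D)]
| i_wk : forall G D G' D', incl G G' -> incl D D' -> inst RWk (G', D') [(G, D)]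
| i_cut : forall G D f, inst (RCut f) (G, D) [(G, f :: D); (f :: G, D)]
| i_box : forall G D pi f,
    inst (RBox pi f) (map (Box pi) G, Box pi f :: D) [(G, f :: map (BoxB pi) D)]
| i_boxB : forall G D pi f,
    inst (RBoxB pi f) (map (BoxB pi) G, BoxB pi f :: D) [(G, f :: map (Box pi) D)]
| i_seqL : forall G D p0 p1 f,
    inst (RSeqL p0 p1 f) (Box (Seq p0 p1) f :: G, D) [(Box p0 (Box p1 f) :: G, D)]
| i_seqR : forall G D p0 p1 f,
    inst (RSeqR p0 p1 f) (G, Box (Seq p0 p1) f :: D) [(G, Box p0 (Box p1 f) :: D)]
| i_choL : forall G D p0 p1 f,
    inst (RChoL p0 p1 f) (Box (Cho p0 p1) f :: G, D) [(Box p0 f :: Box p1 f :: G, D)]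
| i_choR : forall G D p0 p1 f,
    inst (RChoR p0 p1 f) (G, Box (Cho p0 p1) f :: D)
         [(G, Box p0 f :: D); (G, Box p1 f :: D)]
| i_starL : forall G D p f,
    inst (RStarL p f) (Box (Star p) f :: G, D) [(f :: Box p (Box (Star p) f) :: G, D)]
| i_testL : forall G D f g,
    inst (RTestL f g) (Box (Test f) g :: G, D) [(G, f :: D); (g :: G, D)]
| i_testR : forall G D f g,
    inst (RTestR f g) (G, Box (Test f) g :: D) [(f :: G, g :: D)]
| i_starR : forall G p f,
    inst (RStarR p f) (f :: map (Box (Star p)) G, [Box (Star p) f]) [(f :: G, [Box p f])]
| i_cs : forall G D p f,
    inst (RCs p f) (G, Box (Star p) f :: D)
         [(G, f :: D); (G, Box p (Box (Star p) f) :: D)].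

Definition node_ok (r : rlab) (s : sequent) (ps : list sequent) : Prop :=
  exists c ps', inst r c ps' /\ sqeq s c /\ Forall2 sqeq ps ps'.

Inductive tree : Type := Node : sequent -> rlab -> list tree -> tree.

Definition root_seq (t : tree) : sequent := match t with Node s _ _ => s end.

Fixpoint subtree (t : tree) (a : list nat) : option tree :=
  match a with
  | [] => Some t
  | k :: a' => match t with
               | Node _ _ ts => match nth_error ts k with
                                | Some t' => subtree t' a'
                                | None => None
                                end
               end
  end.

Definition bud_target (r : rlab) : option (list nat) :=
  match r with RBud b => Some b | _ => None end.

Definition wf_tree (ok : sequent -> rlab -> Prop) (root : tree) : Prop :=
  forall a s r ts, subtree root a = Some (Node s r ts) ->
    ok s r /\
    match bud_target r with
    | Some b => ts = [] /\ exists s' r' ts', subtree root b = Some (Node s' r' ts')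
                                           /\ ts' <> [] /\ sqeq s s'
    | None => node_ok r s (map root_seq ts)
    end.

Definition cutpol := sequent -> form -> Prop.
Definition anyCut : cutpol := fun _ _ => True.
Definition noCut : cutpol := fun _ _ => False.
Definition flCut : cutpol :=
  fun s f => exists c, In c (fst s ++ snd s) /\ inFL f c.
Definition cut_ok (pol : cutpol) (s : sequent) (r : rlab) : Prop :=
  forall f, r = RCut f -> pol s f.

Definition is_bud (r : rlab) : Prop := exists b, r = RBud b.
Definition is_cs (r : rlab) : Prop := exists p f, r = RCs p f.
Definition is_starR (r : rlab) : Prop := exists p f, r = RStarR p f.

Definition GProv (pol : cutpol) (S : sequent) : Prop :=
  exists t, sqeq (root_seq t) S /\
    wf_tree (fun s r => ~ is_bud r /\ ~ is_cs r /\ cut_ok pol s r) t.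

(* Graph identifying buds with companions: edge from non-bud node a via premise k. *)
Definition succ_addr (a : list nat) (k : nat) (c : tree) : list nat :=
  match c with Node _ r _ => match bud_target r with Some b => b | None => a ++ [k] end end.

Definition edge (t : tree) (a : list nat) (k : nat) (b : list nat) : Prop :=
  exists s r ts c, subtree t a = Some (Node s r ts) /\ bud_target r = None /\
    nth_error ts k = Some c /\ b = succ_addr a k c.

(* Trace components: passing from the principal formula of rule r to its component
   in premise k. *)
Definition comp (r : rlab) (k : nat) (x y : form) : Prop :=
  match r with
  | RImpR f g => x = Imp f g /\ y = g
  | RSeqR p0 p1 f => x = Box (Seq p0 p1) f /\ y = Box p0 (Box p1 f)
  | RChoR p0 p1 f => x = Box (Cho p0 p1) f /\
                     ((k = 0 /\ y = Box p0 f) \/ (k = 1 /\ y = Box p1 f))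
  | RTestR f g => x = Box (Test f) g /\ y = g
  | RCs p f => x = Box (Star p) f /\
               ((k = 0 /\ y = f) \/ (k = 1 /\ y = Box p (Box (Star p) f)))
  | RBox pi f => x = Box pi f /\ y = f
  | RBoxB pi f => x = BoxB pi f /\ y = f
  | _ => False
  end.

Definition progress (r : rlab) (k : nat) (x y : form) : Prop :=
  exists p f, r = RCs p f /\ k = 1 /\ x = Box (Star p) f /\ y = Box p (Box (Star p) f).

Definition seq_at (t : tree) (a : list nat) : option sequent :=
  match subtree t a with Some u => Some (root_seq u) | None => None end.

Definition lab_at (t : tree) (a : list nat) : option rlab :=
  match subtree t a with Some (Node _ r _) => Some r | None => None end.

(* Global trace condition: every infinite path has a tail followed by a trace
   with infinitely many progress points. *)
Definition good_paths (t : tree) : Prop :=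
  forall (f : nat -> list nat) (ks : nat -> nat),
    (forall i, edge t (f i) (ks i) (f (S i))) ->
    exists (N : nat) (tau : nat -> form),
      (forall i, N <= i ->
         exists s r, seq_at t (f i) = Some s /\ lab_at t (f i) = Some r /\
           In (tau i) (snd s) /\
           (tau (S i) = tau i \/ comp r (ks i) (tau i) (tau (S i)))) /\
      (forall m, exists i, m <= i /\ N <= i /\
         exists r, lab_at t (f i) = Some r /\ progress r (ks i) (tau i) (tau (S i))).

Definition CGProv (pol : cutpol) (S : sequent) : Prop :=
  exists t, sqeq (root_seq t) S /\
    wf_tree (fun s r => ~ is_starR r /\ cut_ok pol s r) t /\ good_paths t.

End Syntax.

Arguments Bot {P A}.
Arguments Var {P A}.
Arguments Imp {P A}.
Arguments Box {P A}.
Arguments BoxB {P A}.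
Arguments Atom {P A}.
Arguments Seq {P A}.
Arguments Cho {P A}.
Arguments Star {P A}.
Arguments Test {P A}.
Arguments noCut {P A}.
Arguments flCut {P A}.
Arguments anyCut {P A}.

(* Main.v *)
Require Import Defs.
From Stdlib Require Import List Classical Relations ClassicalEpsilon Lia.
Import ListNotations.

Section Sem.
Variables (P A W : Type) (R : A -> W -> W -> Prop) (V : P -> W -> Prop).

Fixpoint sat (w : W) (f : form P A) {struct f} : Prop :=
  match f with
  | Bot => False
  | Var q => V q w
  | Imp f g => sat w f -> sat w g
  | Box pi g => forall v, rel pi w v -> sat v g
  | BoxB pi g => forall v, rel pi v w -> sat v g
  end
with rel (pi : prog P A) (w v : W) {struct pi} : Prop :=
  match pi with
  | Atom a => R a w v
  | Seq p0 p1 => exists u, rel p0 w u /\ rel p1 u v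
  | Cho p0 p1 => rel p0 w v \/ rel p1 w v
  | Star p => clos_refl_trans W (rel p) w v
  | Test f => w = v /\ sat w f
  end.

Definition valid (s : sequent P A) : Prop :=
  forall w, (forall g, In g (fst s) -> sat w g) -> exists d, In d (snd s) /\ sat w d.

Lemma valid_sqeq s s' : sqeq s s' -> valid s -> valid s'.
Proof.
  destruct s as [G D], s' as [G' D']; intros [HG HD] Hv w Hw; simpl in *.
  assert (H : forall g, In g G -> sat w g) by (intros g Hg; apply Hw, HG, Hg).
  destruct (Hv w H) as [d [Hd1 Hd2]].
  exists d; split; [apply HD|]; auto.
Qed.

Lemma allc w x G : (forall g, In g (x :: G) -> sat w g) -> sat w x /\ (forall g, In g G -> sat w g).
Proof. intros H; split; [apply H; left; auto | intros; apply H; right; auto]. Qed.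

Lemma allcons w x G : sat w x -> (forall g, In g G -> sat w g) -> (forall g, In g (x :: G) -> sat w g).
Proof. intros H1 H2 g [<-|Hg]; auto. Qed.

Ltac prem Hps n w := 
  match n with
  | 0 => specialize (Hps _ (or_introl eq_refl) w)
  | 1 => specialize (Hps _ (or_intror (or_introl eq_refl)) w)
  end.

Lemma inst_sound r c ps : inst r c ps -> (forall q, In q ps -> valid q) -> valid c.
Proof.
  intros Hi Hps; destruct Hi; intros w Hw; simpl in *.
  - exists f; auto.
  - exfalso; exact (Hw _ H).
  - apply allc in Hw as [Hfg Hw].
    pose proof (Hps _ (or_introl eq_refl) w) as H1.
    pose proof (Hps _ (or_intror (or_introl eq_refl)) w) as H2. simpl in *.
    destruct (H1 Hw) as [d [[<-|Hd] Hs]]; [|eauto].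
    apply H2, allcons; auto.
  - pose proof (Hps _ (or_introl eq_refl) w) as H1; simpl in *.
    destruct (classic (exists d, In d D /\ sat w d)) as [[d [Hd Hs]]|Hn]; [exists d; split; [right|]; auto|].
    exists (Imp f g); split; [left; auto|]. simpl; intros Hf.
    destruct (H1 (allcons _ _ _ Hf Hw)) as [d [[<-|Hd] Hs]]; auto.
    exfalso; apply Hn; eauto.
  - pose proof (Hps _ (or_introl eq_refl) w) as H1; simpl in *.
    destruct H1 as [d [Hd Hs]]; [intros; apply Hw; auto|]. exists d; auto.
  - pose proof (Hps _ (or_introl eq_refl) w) as H1.
    pose proof (Hps _ (or_intror (or_introl eq_refl)) w) as H2. simpl in *.
    destruct (H1 Hw) as [d [[<-|Hd] Hs]]; [|eauto].
    apply H2, allcons; auto.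
  - pose proof (Hps _ (or_introl eq_refl)) as H1; simpl in *.
    destruct (classic (exists d, In d D /\ sat w d)) as [[d [Hd Hs]]|Hn]; [exists d; split; [right|]; auto|].
    exists (Box pi f); split; [left; auto|]. simpl; intros v Hv.
    assert (HG : forall g, In g G -> sat v g).
    { intros g Hg. apply (Hw (Box pi g)); [apply in_map; auto | auto]. }
    destruct (H1 v HG) as [d [[<-|Hd] Hs]]; auto.
    apply in_map_iff in Hd as [d' [<- Hd']]. exfalso; apply Hn; exists d'; split; auto.
  - pose proof (Hps _ (or_introl eq_refl)) as H1; simpl in *.
    destruct (classic (exists d, In d D /\ sat w d)) as [[d [Hd Hs]]|Hn]; [exists d; split; [right|]; auto|].
    exists (BoxB pi f); split; [left; auto|]. simpl; intros v Hv.
    assert (HG : forall g, In g G -> sat v g).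
    { intros g Hg. apply (Hw (BoxB pi g)); [apply in_map; auto | auto]. }
    destruct (H1 v HG) as [d [[<-|Hd] Hs]]; auto.
    apply in_map_iff in Hd as [d' [<- Hd']]. exfalso; apply Hn; exists d'; split; auto.
  - apply allc in Hw as [Hx Hw].
    pose proof (Hps _ (or_introl eq_refl) w) as H1; simpl in *.
    apply H1, allcons; auto. simpl; intros u Hu v Hv; apply Hx; eauto.
  - pose proof (Hps _ (or_introl eq_refl) w) as H1; simpl in *.
    destruct (H1 Hw) as [d [[<-|Hd] Hs]]; [|eauto].
    exists (Box (Seq p0 p1) f); split; [left; auto|]; simpl.
    intros v [u [H3 H4]]; exact (Hs u H3 v H4).
  - apply allc in Hw as [Hx Hw].
    pose proof (Hps _ (or_introl eq_refl) w) as H1; simpl in *.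
    apply H1; intros g [<-|[<-|Hg]]; simpl; auto; intros v Hv; apply Hx; auto.
  - pose proof (Hps _ (or_introl eq_refl) w) as H1.
    pose proof (Hps _ (or_intror (or_introl eq_refl)) w) as H2. simpl in *.
    destruct (H1 Hw) as [d [[<-|Hd] Hs]]; [|eauto].
    destruct (H2 Hw) as [d [[<-|Hd] Hs']]; [|eauto].
    exists (Box (Cho p0 p1) f); split; [left; auto|]; simpl.
    intros v [Hv|Hv]; auto.
  - apply allc in Hw as [Hx Hw].
    pose proof (Hps _ (or_introl eq_refl) w) as H1; simpl in *.
    apply H1; intros g [<-|[<-|Hg]]; simpl; auto.
    + apply Hx, rt_refl.
    + intros u Hu v Hv; apply Hx. eapply rt_trans; [apply rt_step|]; eauto.
  - apply allc in Hw as [Hx Hw].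
    pose proof (Hps _ (or_introl eq_refl) w) as H1.
    pose proof (Hps _ (or_intror (or_introl eq_refl)) w) as H2. simpl in *.
    destruct (H1 Hw) as [d [[<-|Hd] Hs]]; [|eauto].
    apply H2, allcons; auto.
  - pose proof (Hps _ (or_introl eq_refl) w) as H1; simpl in *.
    destruct (classic (exists d, In d D /\ sat w d)) as [[d [Hd Hs]]|Hn]; [exists d; split; [right|]; auto|].
    exists (Box (Test f) g); split; [left; auto|]. simpl; intros v [<- Hf].
    destruct (H1 (allcons _ _ _ Hf Hw)) as [d [[<-|Hd] Hs]]; auto.
    exfalso; apply Hn; eauto.
  - pose proof (Hps _ (or_introl eq_refl)) as H1; simpl in *.
    apply allc in Hw as [Hf Hw].
    exists (Box (Star p) f); split; [left; auto|]. simpl; intros v Hv.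
    apply clos_rt_rtn1 in Hv.
    assert (Hb : forall y, clos_refl_trans_n1 W (rel p) w y -> sat y f /\ forall g, In g G -> sat y g).
    { intros y Hy; induction Hy as [|y z Hyz Hy IH].
      - split; auto. intros g Hg. apply (Hw (Box (Star p) g)); [apply in_map; auto| apply rt_refl].
      - destruct IH as [IH1 IH2]. split.
        + destruct (H1 y (allcons _ _ _ IH1 IH2)) as [d [[<-|[]] Hs]]. simpl in Hs; auto.
        + intros g Hg. apply (Hw (Box (Star p) g)); [apply in_map; auto|].
          apply clos_rtn1_rt. econstructor; eauto. }
    exact (proj1 (Hb v Hv)).
  - pose proof (Hps _ (or_introl eq_refl) w) as H1.
    pose proof (Hps _ (or_intror (or_introl eq_refl)) w) as H2. simpl in *.
    destruct (classic (exists d, In d D /\ sat w d)) as [[d [Hd Hs]]|Hn]; [exists d; split; [right|]; auto|].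
    exists (Box (Star p) f); split; [left; auto|]. simpl.
    destruct (H1 Hw) as [d [[<-|Hd] Hs]]; [|exfalso; eauto].
    destruct (H2 Hw) as [d' [[<-|Hd'] Hs']]; [|exfalso; eauto].
    simpl in Hs'. intros v Hv. apply clos_rt_rt1n in Hv. destruct Hv as [|y z Hy Hz]; auto.
    apply (Hs' y Hy). apply clos_rt1n_rt; auto.
Qed.

End Sem.
Arguments sat {P A W} R V w f.
Arguments rel {P A W} R V pi w v.
Arguments valid {P A W} R V s.
Arguments valid_sqeq {P A W} R V s s'.
Arguments inst_sound {P A W} R V r c ps.
Section Trees.
Variables P A : Type.
Implicit Types t : tree P A.

Lemma subtree_app t a b : subtree t (a ++ b) =
  match subtree t a with Some u => subtree u b | None => None end.
Proof.
  revert t; induction a as [|k a IH]; intros [s r ts]; simpl; auto.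
  destruct (nth_error ts k); auto.
Qed.

Fixpoint height t : nat :=
  match t with Node _ _ ts => S (list_max (map height ts)) end.

Lemma le_list_max x l : In x l -> x <= list_max l.
Proof.
  induction l as [|y l IH]; simpl; [tauto|]. intros [<-|H]; [lia|]. specialize (IH H); lia.
Qed.

Lemma height_sub t a u : subtree t a = Some u -> length a < height t.
Proof.
  revert t; induction a as [|k a IH]; intros [s r ts]; simpl; [lia|].
  destruct (nth_error ts k) as [t'|] eqn:E; [|discriminate].
  intros H. specialize (IH _ H).
  assert (height t' <= list_max (map height ts)).
  { apply le_list_max, in_map, nth_error_In with k; auto. }
  lia.
Qed.

Lemma nobud_noinf t (f : nat -> list nat) ks :
  (forall a s r ts, subtree t a = Some (Node s r ts) -> bud_target r = None) ->
  (forall i, edge t (f i) (ks i) (f (S i))) -> False.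
Proof.
  intros Hnb He.
  assert (Hl : forall i, i <= length (f i)).
  { induction i as [|i IH]; [lia|].
    destruct (He i) as [s [r [ts [c [H1 [H2 [H3 H4]]]]]]].
    destruct c as [sc rc tsc].
    assert (Hs : subtree t (f i ++ [ks i]) = Some (Node sc rc tsc)).
    { rewrite subtree_app, H1; simpl; rewrite H3; reflexivity. }
    rewrite H4; simpl. rewrite (Hnb _ _ _ _ Hs). rewrite length_app; simpl; lia. }
  destruct (He (height t)) as [s [r [ts [c [H1 _]]]]].
  apply height_sub in H1. specialize (Hl (height t)). lia.
Qed.

Definition BA (Bad : sequent P A -> Prop) t a : Prop :=
  exists s r ts, subtree t a = Some (Node s r ts) /\ bud_target r = None /\ Bad s.

Lemma bad_path (ok : sequent P A -> rlab P A -> Prop) (Bad : sequent P A -> Prop) t :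
  wf_tree ok t ->
  (forall s s', sqeq s s' -> Bad s -> Bad s') ->
  (forall s r ps, Bad s -> ok s r -> bud_target r = None -> node_ok r s ps ->
     exists q, In q ps /\ Bad q) ->
  BA Bad t [] ->
  exists f ks, (forall i, edge t (f i) (ks i) (f (S i))) /\ (forall i, BA Bad t (f i)).
Proof.
  intros Hwf Hsq Hcl H0.
  assert (step : forall a, BA Bad t a -> exists k b, edge t a k b /\ BA Bad t b).
  { intros a [s [r [ts [H1 [H2 H3]]]]].
    destruct (Hwf _ _ _ _ H1) as [Hok Hm]. rewrite H2 in Hm.
    destruct (Hcl _ _ _ H3 Hok H2 Hm) as [q [Hq Hbq]].
    apply in_map_iff in Hq as [c [Hc Hin]].
    apply In_nth_error in Hin as [k Hk].
    destruct c as [sc rc tsc]; simpl in Hc; subst q.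
    assert (Hs : subtree t (a ++ [k]) = Some (Node sc rc tsc)).
    { rewrite subtree_app, H1; simpl; rewrite Hk; reflexivity. }
    exists k, (succ_addr a k (Node sc rc tsc)). split.
    - exists s, r, ts, (Node sc rc tsc); auto.
    - simpl. destruct (bud_target rc) as [b|] eqn:Eb.
      + destruct (Hwf _ _ _ _ Hs) as [_ Hm2]. rewrite Eb in Hm2.
        destruct Hm2 as [_ [s' [r' [ts' [Hb [Hne Hsq']]]]]].
        exists s', r', ts'. repeat split; auto.
        * destruct (bud_target r') eqn:E'; auto.
          destruct (Hwf _ _ _ _ Hb) as [_ Hm3]. rewrite E' in Hm3. destruct Hm3; contradiction.
        * eapply Hsq; eauto.
      + exists sc, rc, tsc; auto. }
  assert (Hst : forall x : {a | BA Bad t a},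
             {y : nat * {b | BA Bad t b} | edge t (proj1_sig x) (fst y) (proj1_sig (snd y))}).
  { intros [a Ha]. apply constructive_indefinite_description.
    destruct (step a Ha) as [k [b [He Hb]]]. exists (k, exist _ b Hb); simpl; auto. }
  pose (F := fix F (n : nat) : {a | BA Bad t a} :=
              match n with 0 => exist _ [] H0 | S n => snd (proj1_sig (Hst (F n))) end).
  exists (fun i => proj1_sig (F i)), (fun i => fst (proj1_sig (Hst (F i)))). split.
  - intros i. exact (proj2_sig (Hst (F i))).
  - intros i. exact (proj2_sig (F i)).
Qed.

End Trees.
Section Gen.
Variables P A : Type.

Lemma sqeq_sym (s s' : sequent P A) : sqeq s s' -> sqeq s' s.
Proof. intros [H1 H2]; split; intros x; [specialize (H1 x)|specialize (H2 x)]; tauto. Qed.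

Lemma Forall2_In_r {X Y} (Rl : X -> Y -> Prop) l l' y :
  Forall2 Rl l l' -> In y l' -> exists x, In x l /\ Rl x y.
Proof.
  intros H; induction H; simpl; [tauto|]. intros [<-|Hy]; [eauto|].
  destruct (IHForall2 Hy) as [z [? ?]]; eauto.
Qed.

Lemma Forall2_In_l {X Y} (Rl : X -> Y -> Prop) l l' x :
  Forall2 Rl l l' -> In x l -> exists y, In y l' /\ Rl x y.
Proof.
  intros H; induction H; simpl; [tauto|]. intros [<-|Hy]; [eauto|].
  destruct (IHForall2 Hy) as [z [? ?]]; eauto.
Qed.

Definition Inv (s : sequent P A) : Prop :=
  exists (W : Type) (R : A -> W -> W -> Prop) (V : P -> W -> Prop), ~ valid R V s.

Lemma node_inv r s ps : node_ok r s ps -> Inv s -> exists q, In q ps /\ Inv q.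
Proof.
  intros [c [ps' [Hi [Hs H2]]]] [W [R [V Hn]]].
  apply NNPP; intros Hno. apply Hn.
  apply (valid_sqeq R V c s); [apply sqeq_sym; auto|].
  apply (inst_sound R V _ _ _ Hi). intros q' Hq'.
  destruct (Forall2_In_r _ _ _ _ H2 Hq') as [q [Hq1 Hq2]].
  apply (valid_sqeq R V q); auto.
  apply NNPP; intros Hnq. apply Hno. exists q; split; auto. exists W, R, V; auto.
Qed.

Lemma Inv_sqeq s s' : sqeq s s' -> Inv s -> Inv s'.
Proof.
  intros H [W [R [V Hn]]]. exists W, R, V. intros Hv; apply Hn.
  apply (valid_sqeq R V s'); auto. apply sqeq_sym; auto.
Qed.

Lemma node_reduce (Bad : sequent P A -> Prop) r s ps :
  (forall s s', sqeq s s' -> Bad s -> Bad s') ->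
  node_ok r s ps ->
  (forall c ps', inst r c ps' -> sqeq s c -> exists q, In q ps' /\ Bad q) ->
  exists q, In q ps /\ Bad q.
Proof.
  intros Hsq [c [ps' [Hi [Hs H2]]]] Hc.
  destruct (Hc c ps' Hi Hs) as [q' [Hq' Hb]].
  destruct (Forall2_In_r _ _ _ _ H2 Hq') as [q [Hq1 Hq2]].
  exists q; split; auto. eapply Hsq; [apply sqeq_sym|]; eauto.
Qed.

Lemma notbud_none (r : rlab P A) : ~ is_bud r -> bud_target r = None.
Proof. destruct r; simpl; auto. intros H; exfalso; apply H; eexists; eauto. Qed.

Lemma gprov_bad pol (Bad : sequent P A -> Prop) S :
  (forall s s', sqeq s s' -> Bad s -> Bad s') ->
  (forall s r ps, Bad s -> (~ is_bud r /\ ~ is_cs r /\ cut_ok pol s r) ->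
     bud_target r = None -> node_ok r s ps -> exists q, In q ps /\ Bad q) ->
  Bad S -> ~ GProv pol S.
Proof.
  intros Hsq Hcl HS [t [Hr Hwf]].
  assert (Hnb : forall a s r ts, subtree t a = Some (Node s r ts) -> bud_target r = None).
  { intros a s r ts H. destruct (Hwf _ _ _ _ H) as [[Hb _] _]. apply notbud_none; auto. }
  destruct t as [s r ts].
  destruct (bad_path _ _ _ _ _ Hwf Hsq Hcl) as [f [ks [He _]]].
  { exists s, r, ts. repeat split; auto. apply (Hnb [] s r ts); reflexivity.
    eapply Hsq; [apply sqeq_sym; exact Hr|]; auto. }
  exact (nobud_noinf _ _ _ _ _ Hnb He).
Qed.

Lemma cgprov_bad pol (Bad : sequent P A -> Prop) S :
  (forall s s', sqeq s s' -> Bad s -> Bad s') ->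
  (forall s r ps, Bad s -> (~ is_starR r /\ cut_ok pol s r) ->
     bud_target r = None -> node_ok r s ps -> exists q, In q ps /\ Bad q) ->
  (forall s r ps, Bad s -> node_ok r s ps -> ~ is_cs r) ->
  Bad S -> ~ CGProv pol S.
Proof.
  intros Hsq Hcl Hcs HS [t [Hr [Hwf Hgp]]].
  destruct t as [s r ts].
  assert (Hroot : bud_target r = None).
  { destruct (bud_target r) as [b|] eqn:Eb; auto.
    destruct (Hwf [] s r ts eq_refl) as [_ Hm]. rewrite Eb in Hm.
    destruct Hm as [Hts [s' [r' [ts' [Hb [Hne _]]]]]]. subst ts.
    destruct b as [|k b]; simpl in Hb.
    - inversion Hb; subst; contradiction.
    - destruct k; discriminate. }
  destruct (bad_path _ _ _ _ _ Hwf Hsq Hcl) as [f [ks [He Hba]]].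
  { exists s, r, ts. repeat split; auto.
    eapply Hsq; [apply sqeq_sym; exact Hr|]; auto. }
  destruct (Hgp f ks He) as [N [tau [_ Hprog]]].
  destruct (Hprog 0) as [i [_ [_ [r0 [Hl Hp]]]]].
  destruct (Hba i) as [s1 [r1 [ts1 [H1 [H2 H3]]]]].
  unfold lab_at in Hl; rewrite H1 in Hl; inversion Hl; subst r1.
  destruct (Hwf _ _ _ _ H1) as [_ Hm]; rewrite H2 in Hm.
  apply (Hcs _ _ _ H3 Hm).
  destruct Hp as [p0 [f0 [-> _]]]. exists p0, f0; auto.
Qed.

End Gen.
Arguments Inv {P A} s.
Arguments Inv_sqeq {P A} s s'.
Arguments node_inv {P A} r s ps.
Arguments node_reduce {P A} Bad r s ps.
Arguments gprov_bad {P A} pol Bad S.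
Arguments cgprov_bad {P A} pol Bad S.
Arguments sqeq_sym {P A} s s'.
Section Part1.
Variables (P A : Type) (p : P) (a : A).
Let Sx : form P A := Box (Star (Atom a)) (Var p).
Let Bx : form P A := Box (Atom a) Sx.
Let S1 : sequent P A := ([Var p; Bx], [Sx]).

Lemma flb_atom c (X : form P A) : inFLb c (Box (Atom a) X) -> c = Box (Atom a) X.
Proof. intros H; inversion H; subst; auto. Qed.

Lemma fl_var c : inFL c (Var p : form P A) -> c = Var p.
Proof. intros H; inversion H; subst; auto. Qed.

Lemma fl_S c : inFL c Sx -> c = Sx \/ c = Bx \/ c = Var p.
Proof.
  unfold Sx; intros H; inversion H; subst.
  - match goal with H : inFLb _ _ |- _ => inversion H; subst end; auto.
    match goal with H : inFLb _ _ |- _ => apply flb_atom in H; subst end; auto.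
  - match goal with H : inFL _ _ |- _ => apply fl_var in H end; auto.
Qed.

Lemma fl_B c : inFL c Bx -> c = Sx \/ c = Bx \/ c = Var p.
Proof.
  unfold Bx; intros H; inversion H; subst.
  - match goal with H : inFLb _ _ |- _ => apply flb_atom in H end; auto.
  - match goal with H : inFL _ _ |- _ => apply fl_S in H end; auto.
Qed.

Definition Bad1 (s : sequent P A) : Prop := sqeq s S1 \/ Inv s.

Lemma Bad1_sqeq s s' : sqeq s s' -> Bad1 s -> Bad1 s'.
Proof.
  intros H [H1|H1]; [left|right; eapply Inv_sqeq; eauto].
  destruct H as [Ha Hb], H1 as [Hc Hd]; split; intros x;
  [specialize (Ha x); specialize (Hc x)|specialize (Hb x); specialize (Hd x)]; tauto.
Qed.

Lemma S1_inst r c ps' : inst r c ps' -> seteq (fst c) [Var p; Bx] -> seteq (snd c) [Sx] ->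
  ~ is_cs r -> (forall f, r = RCut f -> f = Sx \/ f = Bx \/ f = Var p) ->
  exists q, In q ps' /\ Bad1 q.
Proof.
  unfold Bx, Sx; intros Hi HG HD Hcs Hcut; destruct Hi; simpl in *.
  - apply HG in H; apply HD in H0; simpl in *; intuition congruence.
  - apply HG in H; simpl in *; intuition congruence.
  - destruct (proj1 (HG (Imp f g)) (or_introl eq_refl)); simpl in *; intuition congruence.
  - destruct (proj1 (HD (Imp f g)) (or_introl eq_refl)); simpl in *; intuition congruence.
  -
    exists (G, D); split; [left; auto|].
    destruct (classic (In (Var p) G)) as [Hp|Hp];
    [destruct (classic (In Bx G)) as [HB|HB];
     [destruct (classic (In Sx D)) as [HS|HS]|]|].
    + left; split; simpl; intros x; split; intros Hx.
      * apply HG, H; auto.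
      * destruct Hx as [<-|[<-|[]]]; auto.
      * apply HD, H0; auto.
      * destruct Hx as [<-|[]]; auto.
    + right. exists unit, (fun _ _ _ => False), (fun _ _ => True).
      intros Hv. destruct (Hv tt) as [d [Hd _]].
      * intros g Hg. apply H, HG in Hg. simpl in Hg.
        destruct Hg as [<-|[<-|[]]]; simpl; auto; try (intros v []).
      * apply HS. pose proof (proj1 (HD d) (H0 _ Hd)) as E. simpl in E.
        destruct E as [<-|[]]; auto.
    + right. exists bool, (fun _ x y => x = true /\ y = false), (fun _ x => x = true).
      intros Hv. destruct (Hv true) as [d [Hd Hs]].
      * intros g Hg. pose proof (proj1 (HG g) (H _ Hg)) as E. simpl in E.
        destruct E as [<-|[<-|[]]]; simpl; auto; contradiction.
      * pose proof (proj1 (HD d) (H0 _ Hd)) as E. simpl in E.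
        destruct E as [<-|[]]. simpl in Hs.
        specialize (Hs false (rt_step _ _ _ _ (conj eq_refl eq_refl))). discriminate.
    + right. exists unit, (fun _ _ _ => False), (fun _ _ => False).
      intros Hv. destruct (Hv tt) as [d [Hd Hs]].
      * intros g Hg. pose proof (proj1 (HG g) (H _ Hg)) as E. simpl in E.
        destruct E as [<-|[<-|[]]]; simpl; auto; try contradiction; try (intros v []).
      * pose proof (proj1 (HD d) (H0 _ Hd)) as E. simpl in E.
        destruct E as [<-|[]]. simpl in Hs. exact (Hs tt (rt_refl _ _ _)).
  - destruct (Hcut f eq_refl) as [ -> | [ -> | -> ]].
    + exists (G, Box (Star (Atom a)) (Var p) :: D); split; [left; auto|left].
      split; simpl; auto. intros x; specialize (HD x); simpl in *; tauto.
    + exists (Box (Atom a) (Box (Star (Atom a)) (Var p)) :: G, D); split; [right; left; auto|left].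
      split; simpl; auto. intros x; specialize (HG x); simpl in *; tauto.
    + exists (Var p :: G, D); split; [right; left; auto|left].
      split; simpl; auto. intros x; specialize (HG x); simpl in *; tauto.
  - pose proof (proj2 (HG (Var p)) (or_introl eq_refl)) as E; apply in_map_iff in E as [x [Hx _]]; discriminate.
  - destruct (proj1 (HD (BoxB pi f)) (or_introl eq_refl)); simpl in *; intuition congruence.
  - destruct (proj1 (HG _) (or_introl eq_refl)); simpl in *; intuition congruence.
  - destruct (proj1 (HD _) (or_introl eq_refl)); simpl in *; intuition congruence.
  - destruct (proj1 (HG _) (or_introl eq_refl)); simpl in *; intuition congruence.
  - destruct (proj1 (HD _) (or_introl eq_refl)); simpl in *; intuition congruence.
  - destruct (proj1 (HG _) (or_introl eq_refl)); simpl in *; intuition congruence.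
  - destruct (proj1 (HG _) (or_introl eq_refl)); simpl in *; intuition congruence.
  - destruct (proj1 (HD _) (or_introl eq_refl)); simpl in *; intuition congruence.
  - destruct (proj1 (HD _) (or_introl eq_refl)) as [E|[]]. injection E as E1 E2; subst.
    destruct (proj2 (HG (Box (Atom a) (Box (Star (Atom a)) (Var p)))) (or_intror (or_introl eq_refl))) as [E|E].
    + discriminate.
    + apply in_map_iff in E as [x [Hx _]]; discriminate.
  - exfalso; apply Hcs; eexists; eauto.
Qed.

Lemma part1 : ~ GProv flCut S1.
Proof.
  apply (gprov_bad _ Bad1); [exact Bad1_sqeq| |left; split; intros x; tauto].
  intros s r ps [Hs|Hs] [_ [Hcs Hcut]] _ Hn.
  - apply (node_reduce Bad1 r s ps Bad1_sqeq Hn).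
    intros c ps' Hi Hsc.
    destruct Hs as [HsG HsD], Hsc as [HcG HcD].
    apply (S1_inst r c ps' Hi).
    + intros x; specialize (HsG x); specialize (HcG x); tauto.
    + intros x; specialize (HsD x); specialize (HcD x); tauto.
    + exact Hcs.
    + intros f ->. destruct (Hcut f eq_refl) as [c0 [Hc0 Hfl]].
      apply in_app_or in Hc0 as [Hc0|Hc0]; [apply HsG in Hc0 | apply HsD in Hc0];
      simpl in Hc0.
      * destruct Hc0 as [<-|[<-|[]]].
        -- apply fl_var in Hfl; auto.
        -- apply fl_B in Hfl; auto.
      * destruct Hc0 as [<-|[]]. apply fl_S in Hfl; auto.
  - destruct (node_inv _ _ _ Hn Hs) as [q [Hq Hi]]. exists q; split; [|right]; auto.
Qed.

Lemma part1_nocut : ~ GProv noCut S1.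
Proof.
  intros [t [Hr Hwf]]. apply part1. exists t; split; auto.
  intros a0 s r ts H. destruct (Hwf a0 s r ts H) as [[H1 [H2 H3]] H4]. repeat split; auto.
  intros f E. destruct (H3 f E).
Qed.

End Part1.
Section SF.
Variables (P A : Type).
Fixpoint sff (f : form P A) : Prop :=
  match f with
  | Bot => True | Var _ => True
  | Imp f g => sff f /\ sff g
  | Box pi f => sfp pi /\ sff f
  | BoxB pi f => sfp pi /\ sff f
  end
with sfp (pi : prog P A) : Prop :=
  match pi with
  | Atom _ => True
  | Seq p q => sfp p /\ sfp q
  | Cho p q => sfp p /\ sfp q
  | Star _ => False
  | Test f => sff f
  end.

Definition SF (s : sequent P A) : Prop :=
  (forall x, In x (fst s) -> sff x) /\ (forall x, In x (snd s) -> sff x).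

Lemma SF_sqeq s s' : sqeq s s' -> SF s -> SF s'.
Proof.
  intros [H1 H2] [H3 H4]; split; intros x Hx; [apply H3, H1 | apply H4, H2]; auto.
Qed.

Lemma inst_sf r c ps : inst r c ps -> (forall f, r <> RCut f) -> SF c -> forall q, In q ps -> SF q.
Proof.
  intros Hi Hnc [HL HR] q Hq; destruct Hi; simpl in *;
  try (pose proof (HL _ (or_introl eq_refl)) as HL0; simpl in HL0);
  try (pose proof (HR _ (or_introl eq_refl)) as HR0; simpl in HR0);
  repeat destruct Hq as [<-|Hq]; try contradiction; split; simpl; intros x Hx;
  repeat destruct Hx as [<-|Hx]; try tauto;
  try (apply HL; tauto); try (apply HR; tauto); try (simpl; tauto).
  - apply HL, H; auto.
  - apply HR, H0; auto.
  - exfalso; eapply Hnc; eauto.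
  - exfalso; eapply Hnc; eauto.
  - exact (proj2 (HL _ (in_map _ _ _ Hx))).
  - apply in_map_iff in Hx as [y [<- Hy]]. simpl. split; [tauto|]. apply HR; auto.
  - exact (proj2 (HL _ (in_map _ _ _ Hx))).
  - apply in_map_iff in Hx as [y [<- Hy]]. simpl. split; [tauto|]. apply HR; auto.
Qed.
End SF.
Arguments sff {P A} f.
Arguments sfp {P A} pi.
Arguments SF {P A} s.
Section Part4.
Variables (P A : Type) (p : P) (a : A).
Let X : form P A := Box (Atom a) (DiaB (Atom a) (Var p)).
Let S2 : sequent P A := ([Var p], [X]).

Definition Bad2 (s : sequent P A) : Prop := sqeq s S2 \/ (Inv s /\ SF s).

Lemma Bad2_sqeq s s' : sqeq s s' -> Bad2 s -> Bad2 s'.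
Proof.
  intros H [H1|[H1 H2]]; [left|right; split; [eapply Inv_sqeq|eapply SF_sqeq]; eauto].
  destruct H as [Ha Hb], H1 as [Hc Hd]; split; intros x;
  [specialize (Ha x); specialize (Hc x)|specialize (Hb x); specialize (Hd x)]; tauto.
Qed.

Lemma S2_inst r c ps' : inst r c ps' -> seteq (fst c) [Var p] -> seteq (snd c) [X] ->
  (forall f, r <> RCut f) -> exists q, In q ps' /\ Bad2 q.
Proof.
  unfold X; intros Hi HG HD Hcut; destruct Hi; simpl in *.
  - apply HG in H; apply HD in H0; simpl in *; intuition congruence.
  - apply HG in H; simpl in *; intuition congruence.
  - destruct (proj1 (HG (Imp f g)) (or_introl eq_refl)); simpl in *; intuition congruence.
  - destruct (proj1 (HD (Imp f g)) (or_introl eq_refl)); simpl in *; intuition congruence.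
  - exists (G, D); split; [left; auto|].
    destruct (classic (In (Var p) G)) as [Hp|Hp];
    [destruct (classic (In X D)) as [HS|HS]|].
    + left; split; simpl; intros x; split; intros Hx.
      * apply HG, H; auto.
      * destruct Hx as [<-|[]]; auto.
      * apply HD, H0; auto.
      * destruct Hx as [<-|[]]; auto.
    + right; split.
      * exists unit, (fun _ _ _ => False), (fun _ _ => True).
        intros Hv. destruct (Hv tt) as [d [Hd _]].
        -- intros g Hg. apply H, HG in Hg. simpl in Hg.
           destruct Hg as [<-|[]]; simpl; auto.
        -- apply HS. pose proof (proj1 (HD d) (H0 _ Hd)) as E. simpl in E.
           destruct E as [<-|[]]; auto.
      * split; simpl; intros x Hx.
        -- pose proof (proj1 (HG x) (H _ Hx)) as E; simpl in E; destruct E as [<-|[]]; simpl; auto.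
        -- pose proof (proj1 (HD x) (H0 _ Hx)) as E; simpl in E; destruct E as [<-|[]]; simpl; tauto.
    + right; split.
      * exists bool, (fun _ x y => x = true /\ y = false), (fun _ _ => False).
        intros Hv. destruct (Hv true) as [d [Hd Hs]].
        -- intros g Hg. pose proof (proj1 (HG g) (H _ Hg)) as E. simpl in E.
           destruct E as [<-|[]]; contradiction.
        -- pose proof (proj1 (HD d) (H0 _ Hd)) as E. simpl in E.
           destruct E as [<-|[]]. simpl in Hs.
           apply (Hs false (conj eq_refl eq_refl)). intros u _ [].
      * split; simpl; intros x Hx.
        -- pose proof (proj1 (HG x) (H _ Hx)) as E; simpl in E; destruct E as [<-|[]]; simpl; auto.
        -- pose proof (proj1 (HD x) (H0 _ Hx)) as E; simpl in E; destruct E as [<-|[]]; simpl; tauto.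
  - exfalso; eapply Hcut; eauto.
  - pose proof (proj2 (HG (Var p)) (or_introl eq_refl)) as E; apply in_map_iff in E as [x [Hx _]]; discriminate.
  - destruct (proj1 (HD (BoxB pi f)) (or_introl eq_refl)); simpl in *; intuition congruence.
  - destruct (proj1 (HG _) (or_introl eq_refl)); simpl in *; intuition congruence.
  - destruct (proj1 (HD _) (or_introl eq_refl)); simpl in *; intuition congruence.
  - destruct (proj1 (HG _) (or_introl eq_refl)); simpl in *; intuition congruence.
  - destruct (proj1 (HD _) (or_introl eq_refl)); simpl in *; intuition congruence.
  - destruct (proj1 (HG _) (or_introl eq_refl)); simpl in *; intuition congruence.
  - destruct (proj1 (HG _) (or_introl eq_refl)); simpl in *; intuition congruence.
  - destruct (proj1 (HD _) (or_introl eq_refl)); simpl in *; intuition congruence.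
  - destruct (proj2 (HD _) (or_introl eq_refl)); simpl in *; intuition congruence.
  - destruct (proj1 (HD _) (or_introl eq_refl)); simpl in *; intuition congruence.
Qed.

Lemma Bad2_closure s r ps : Bad2 s -> (forall f, r <> RCut f) -> node_ok r s ps ->
  exists q, In q ps /\ Bad2 q.
Proof.
  intros [Hs|[Hs Hsf]] Hnc Hn.
  - apply (node_reduce Bad2 r s ps Bad2_sqeq Hn).
    intros c ps' Hi Hsc.
    destruct Hs as [HsG HsD], Hsc as [HcG HcD].
    apply (S2_inst r c ps' Hi); auto.
    + intros x; specialize (HsG x); specialize (HcG x); tauto.
    + intros x; specialize (HsD x); specialize (HcD x); tauto.
  - destruct (node_inv _ _ _ Hn Hs) as [q [Hq Hi]]. exists q; split; [|right; split]; auto.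
    destruct Hn as [c [ps' [Hi' [Hsc H2]]]].
    destruct (Forall2_In_l _ _ _ _ H2 Hq) as [q' [Hq' Hqq]].
    apply (SF_sqeq _ _ q'); [apply sqeq_sym; auto|].
    apply (inst_sf _ _ _ _ _ Hi' Hnc); auto. eapply SF_sqeq; eauto.
Qed.

Lemma Bad2_nocs s r ps : Bad2 s -> node_ok r s ps -> ~ is_cs r.
Proof.
  intros Hb [c [ps' [Hi [Hsc _]]]] [p0 [f0 ->]].
  inversion Hi; subst.
  assert (Hin : In (Box (Star p0) f0) (snd s)) by (apply (proj2 Hsc); left; auto).
  destruct Hb as [[_ HD]|[_ [_ HR]]].
  - apply HD in Hin; simpl in Hin; unfold X in Hin; intuition congruence.
  - apply HR in Hin; simpl in Hin; tauto.
Qed.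

Lemma part4a : ~ GProv noCut S2.
Proof.
  apply (gprov_bad _ Bad2); [exact Bad2_sqeq| |left; split; intros x; tauto].
  intros s r ps Hs [_ [_ Hcut]] _ Hn. apply (Bad2_closure s r ps); auto.
Qed.

Lemma part4b : ~ CGProv noCut S2.
Proof.
  apply (cgprov_bad _ Bad2); [exact Bad2_sqeq| | exact Bad2_nocs |left; split; intros x; tauto].
  intros s r ps Hs [_ Hcut] _ Hn. apply (Bad2_closure s r ps); auto.
Qed.
End Part4.
Section Pos.
Variables (P A : Type).
Fixpoint allN (Q : sequent P A -> rlab P A -> list (tree P A) -> Prop) (t : tree P A) : Prop :=
  match t with Node s r ts => Q s r ts /\
    (fix go (l : list (tree P A)) : Prop :=
       match l with [] => True | u :: l' => allN Q u /\ go l' end) ts end.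

Lemma allN_sub Q a : forall t s r ts, allN Q t -> subtree t a = Some (Node s r ts) -> Q s r ts.
Proof.
  induction a as [|k a IH]; intros [s0 r0 ts0] s r ts [H1 H2] Hs; simpl in Hs.
  - inversion Hs; subst; auto.
  - destruct (nth_error ts0 k) as [t'|] eqn:E; [|discriminate].
    apply (IH t'); auto. clear Hs IH H1.
    revert k E; induction ts0 as [|u l IHl]; intros k E; [destruct k; discriminate|].
    destruct H2 as [H2 H3]. destruct k as [|k]; simpl in E.
    + inversion E; subst; auto.
    + apply (IHl H3 k E).
Qed.

Definition goodQ (ok : sequent P A -> rlab P A -> Prop) s r ts :=
  ok s r /\ bud_target r = None /\ node_ok r s (map (@root_seq P A) ts).

Lemma wf_allN ok t : allN (goodQ ok) t -> wf_tree ok t.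
Proof.
  intros H a s r ts Hs. destruct (allN_sub _ _ _ _ _ _ H Hs) as [H1 [H2 H3]].
  rewrite H2; auto.
Qed.

Lemma gp_allN ok t : allN (goodQ ok) t -> good_paths t.
Proof.
  intros H f ks He. exfalso. apply (nobud_noinf _ _ t f ks); auto.
  intros a s r ts Hs. destruct (allN_sub _ _ _ _ _ _ H Hs) as [H1 [H2 H3]]; auto.
Qed.

Lemma seteq_refl (l : list (form P A)) : seteq l l.
Proof. intros x; tauto. Qed.

Lemma node_ok_exact (r : rlab P A) s ps : inst r s ps -> node_ok r s ps.
Proof.
  intros H. exists s, ps. split; [auto|split; [split; apply seteq_refl|]].
  clear H; induction ps; constructor; auto; split; apply seteq_refl.
Qed.
End Pos.
Arguments allN {P A} Q t.
Arguments goodQ {P A} ok s r ts.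
Arguments wf_allN {P A} ok t.
Arguments gp_allN {P A} ok t.
Arguments node_ok_exact {P A} r s ps.
Arguments seteq_refl {P A} l.

Section Trees2.
Variables (P A : Type) (p : P) (a : A).
Let Sx : form P A := Box (Star (Atom a)) (Var p).
Let Bx : form P A := Box (Atom a) Sx.
Let S1 : sequent P A := ([Var p; Bx], [Sx]).
Let Np : form P A := Imp (Var p) Bot.
Let Z : form P A := BoxB (Atom a) Np.
Let Y : form P A := DiaB (Atom a) (Var p).
Let X : form P A := Box (Atom a) Y.
Let S2 : sequent P A := ([Var p], [X]).

Definition t2 : tree P A :=
  Node S1 (RCs (Atom a) (Var p))
    [Node ([Var p; Bx], [Var p]) (RAx P A) []; Node ([Var p; Bx], [Bx]) (RAx P A) []].

Definition t3 : tree P A :=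
  Node S2 (RCut Np)
   [Node ([Var p], [Np; X]) (RWk P A)
      [Node ([], [X; Np]) (RBox (Atom a) Y)
         [Node ([], [Y; Z]) (RImpR Z Bot)
            [Node ([Z], [Bot; Z]) (RAx P A) []]]];
    Node ([Np; Var p], [X]) (RImpL (Var p) Bot)
      [Node ([Var p], [Var p; X]) (RAx P A) [];
       Node ([Bot; Var p], [X]) (RBot P A) []]].

Lemma t2_ok : allN (goodQ (fun s r => ~ is_starR r /\ cut_ok noCut s r)) t2.
Proof.
  unfold goodQ; simpl.
  repeat split; try (intros [? [? E]]; discriminate); try (intros ? E; discriminate);
  apply node_ok_exact.
  - exact (i_cs [Var p; Bx] [] (Atom a) (Var p)).
  - apply i_ax with (Var p); simpl; auto.
  - apply i_ax with Bx; simpl; auto.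
Qed.

Lemma part2 : CGProv noCut S1.
Proof.
  exists t2. split; [split; apply seteq_refl|]. split.
  - apply wf_allN, t2_ok.
  - eapply gp_allN, t2_ok.
Qed.

Lemma t3_ok (ok : sequent P A -> rlab P A -> Prop) :
  (forall s r, ~ is_bud r -> ~ is_cs r -> ~ is_starR r -> ok s r) -> allN (goodQ ok) t3.
Proof.
  intros Hok. unfold goodQ; simpl.
  repeat split; try (apply Hok; [intros [? E]|intros [? [? E]]|intros [? [? E]]]; discriminate);
  apply node_ok_exact.
  - exact (i_cut [Var p] [X] Np).
  - apply i_wk; intros x; simpl; tauto.
  - exact (i_box [] [Np] (Atom a) Y).
  - exact (i_impR [] [Z] Z Bot).
  - apply i_ax with Z; simpl; auto.
  - exact (i_impL [Var p] [X] (Var p) Bot).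
  - apply i_ax with (Var p); simpl; auto.
  - apply i_bot; simpl; auto.
Qed.

Lemma part3a : GProv anyCut S2.
Proof.
  exists t3. split; [split; apply seteq_refl|].
  apply wf_allN, t3_ok. intros s r H1 H2 H3. split; [|split]; auto. intros f _; exact I.
Qed.

Lemma part3b : CGProv anyCut S2.
Proof.
  exists t3. split; [split; apply seteq_refl|]. split.
  - apply wf_allN, t3_ok. intros s r H1 H2 H3. split; auto. intros f _; exact I.
  - apply (gp_allN (fun s r => ~ is_starR r /\ cut_ok anyCut s r)), t3_ok.
    intros s r H1 H2 H3. split; auto. intros f _; exact I.
Qed.
End Trees2.

Theorem mainTheorem9 (P A : Type) (p : P) (a : A) :
  let S1 : sequent P A :=
    ([Var p; Box (Atom a) (Box (Star (Atom a)) (Var p))],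
     [Box (Star (Atom a)) (Var p)]) in
  let S2 : sequent P A :=
    ([Var p], [Box (Atom a) (DiaB (Atom a) (Var p))]) in
  (* (1) *) (~ GProv noCut S1 /\ ~ GProv flCut S1) /\
  (* (2) *) CGProv noCut S1 /\
  (* (3) *) (GProv anyCut S2 /\ CGProv anyCut S2) /\
  (* (4) *) (~ GProv noCut S2 /\ ~ CGProv noCut S2).
Proof.
  intros S1 S2.
  split; [split|split; [|split; split]].
  - exact (part1_nocut P A p a).
  - exact (part1 P A p a).
  - exact (part2 P A p a).
  - exact (part3a P A p a).
  - exact (part3b P A p a).
  - exact (part4a P A p a).
  - exact (part4b P A p a).
Qed.
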